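(* A division ring $D$ is locally finite if and only if $D$ is weakly locally finite and algebraic over its center.
   Context: Let $D$ have center $F$. $D$ is locally finite if for every finite subset $S\subseteq D$, the division subring $F(S)$ generated by $S$ over $F$ is finite dimensional over $F$. $D$ is weakly locally finite if for every finite subset $S\subseteq D$, the division subring generated by $S$ is finite dimensional over its own center. $D$ is algebraic if every element of $D$ is algebraic over $F$. *)

(* Defs.v *)
From mathcomp Require Import all_boot all_order all_algebra.
Set Implicit Arguments. Unset Strict Implicit. Unset Printing Implicit Defensive.
Import GRing.Theory.
Local Open Scope ring_scope.

Definition is_division_ring (D : unitRingType) : Prop :=
  forall x : D, x != 0 -> x \is a GRing.unit.

Definition centerof (D : unitRingType) (K : D -> Prop) : D -> Prop :=
  fun z => K z /\ forall y, K y -> z * y = y * z.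

Definition center (D : unitRingType) : D -> Prop := centerof (fun _ => True).

Definition division_subring (D : unitRingType) (K : D -> Prop) : Prop :=
  [/\ K 1,
      forall x y, K x -> K y -> K (x - y),
      forall x y, K x -> K y -> K (x * y) &
      forall x, K x -> x != 0 -> K x^-1].

Definition div_gen (D : unitRingType) (A : D -> Prop) : D -> Prop :=
  fun x => forall K : D -> Prop,
    division_subring K -> (forall a, A a -> K a) -> K x.

Definition div_gen_over_center (D : unitRingType) (S : seq D) : D -> Prop :=
  div_gen (fun a => center a \/ a \in S).

Definition findim_over (D : unitRingType) (F K : D -> Prop) : Prop :=
  exists (n : nat) (b : 'I_n -> D),
    (forall i, K (b i)) /\
    forall x, K x -> exists c : 'I_n -> D,
      (forall i, F (c i)) /\ x = \sum_(i < n) c i * b i.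

Definition locally_finite (D : unitRingType) : Prop :=
  forall S : seq D, findim_over (@center D) (div_gen_over_center S).

Definition weakly_locally_finite (D : unitRingType) : Prop :=
  forall S : seq D,
    let K := div_gen (fun a => a \in S) in findim_over (centerof K) K.

Definition algebraic_over_center (D : unitRingType) : Prop :=
  forall x : D, exists p : {poly D},
    [/\ p != 0, (forall i, center p`_i) & p.[x] = 0].

(* Main.v *)
Require Import Defs.
From mathcomp Require Import all_boot all_order all_algebra.
From mathcomp Require Import zify.
From Stdlib Require Import Classical IndefiniteDescription.
Set Implicit Arguments. Unset Strict Implicit. Unset Printing Implicit Defensive.
Import GRing.Theory.
Local Open Scope ring_scope.

Section Basics.
Variable D : unitRingType.

Lemma dsr0 (R : D -> Prop) : division_subring R -> R 0.
Proof. by case=> h1 hB _ _; rewrite -(subrr 1); apply: hB. Qed.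

Lemma dsrN (R : D -> Prop) x : division_subring R -> R x -> R (- x).
Proof. move=> hR hx; rewrite -sub0r; case: (hR) => _ hB _ _; apply: hB => //; exact: dsr0. Qed.

Lemma dsrD (R : D -> Prop) x y : division_subring R -> R x -> R y -> R (x + y).
Proof. move=> hR hx hy; rewrite -[y]opprK; case: (hR) => _ hB _ _; apply: hB => //; exact: dsrN. Qed.

Lemma dsrB (R : D -> Prop) x y : division_subring R -> R x -> R y -> R (x - y).
Proof. by case=> _ hB _ _; apply: hB. Qed.

Lemma dsrM (R : D -> Prop) x y : division_subring R -> R x -> R y -> R (x * y).
Proof. by case=> _ _ hM _; apply: hM. Qed.

Lemma dsr1 (R : D -> Prop) : division_subring R -> R 1.
Proof. by case. Qed.

Lemma dsrV (R : D -> Prop) x : division_subring R -> R x -> x != 0 -> R x^-1.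
Proof. by case=> _ _ _; apply. Qed.

Lemma dsr_sum (R : D -> Prop) (I : finType) (F : I -> D) :
  division_subring R -> (forall i, R (F i)) -> R (\sum_i F i).
Proof.
move=> hR hF; apply: (big_ind R) => //; first exact: dsr0.
by move=> x y; apply: dsrD.
Qed.

Lemma dsrX (R : D -> Prop) x n : division_subring R -> R x -> R (x ^+ n).
Proof.
move=> hR hx; elim: n => [|n IH]; first by rewrite expr0; exact: dsr1.
by rewrite exprS; apply: dsrM.
Qed.

Definition lspan (R : D -> Prop) (I : finType) (w : I -> D) (x : D) :=
  exists c : I -> D, (forall i, R (c i)) /\ x = \sum_i c i * w i.

Variable R : D -> Prop.
Hypothesis hR : division_subring R.

Lemma lspan0 (I : finType) (w : I -> D) : lspan R w 0.
Proof. exists (fun _ => 0); split=> [i|]; first exact: dsr0.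
by rewrite big1 // => i _; rewrite mul0r. Qed.

Lemma lspan_gen (I : finType) (w : I -> D) i : lspan R w (w i).
Proof.
exists (fun j => if j == i then 1 else 0); split=> [j|].
  by case: ifP => _; [exact: dsr1 | exact: dsr0].
rewrite (bigD1 i) //= eqxx mul1r big1 ?addr0 // => j /negbTE ->; exact: mul0r.
Qed.

Lemma lspanD (I : finType) (w : I -> D) x y :
  lspan R w x -> lspan R w y -> lspan R w (x + y).
Proof.
move=> [c [hc ->]] [d [hd ->]]; exists (fun i => c i + d i); split.
  by move=> i; apply: dsrD.
by rewrite -big_split /=; apply: eq_bigr => i _; rewrite mulrDl.
Qed.

Lemma lspan_scale (I : finType) (w : I -> D) r x :
  R r -> lspan R w x -> lspan R w (r * x).
Proof.
move=> hr [c [hc ->]]; exists (fun i => r * c i); split.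
  by move=> i; apply: dsrM.
by rewrite mulr_sumr; apply: eq_bigr => i _; rewrite mulrA.
Qed.

Lemma lspanN (I : finType) (w : I -> D) x : lspan R w x -> lspan R w (- x).
Proof.
move=> h; rewrite -mulN1r; apply: lspan_scale => //; apply: dsrN => //; exact: dsr1.
Qed.

Lemma lspanB (I : finType) (w : I -> D) x y :
  lspan R w x -> lspan R w y -> lspan R w (x - y).
Proof. by move=> hx hy; apply: lspanD => //; apply: lspanN. Qed.

Lemma lspan_sum (I J : finType) (w : I -> D) (F : J -> D) :
  (forall j, lspan R w (F j)) -> lspan R w (\sum_j F j).
Proof.
move=> hF; apply: (big_ind (lspan R w)) => //; first exact: lspan0.
by move=> x y; apply: lspanD.
Qed.

End Basics.

Lemma fchoice (A B : Type) (P : A -> B -> Prop) :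
  (forall a, exists b, P a b) -> exists f : A -> B, forall a, P a (f a).
Proof.
move=> H; exists (fun a => proj1_sig (constructive_indefinite_description _ (H a))).
move=> a; exact: proj2_sig.
Qed.

Section Steinitz.
Variable D : unitRingType.
Hypothesis hD : is_division_ring D.
Variable R : D -> Prop.
Hypothesis hR : division_subring R.

Lemma steinitz (n : nat) : forall m (w : 'I_n -> D) (v : 'I_m -> D),
  (n < m)%N -> (forall i, lspan R w (v i)) ->
  exists c : 'I_m -> D, [/\ forall i, R (c i), exists i, c i != 0 &
     \sum_i c i * v i = 0].
Proof.
elim: n => [|n IH] m w v hnm hv.
  exists (fun _ => 1); split.
  - by move=> _; exact: dsr1.
  - by exists (Ordinal hnm); exact: oner_neq0.
  - apply: big1 => i _; case: (hv i) => c [_ ->]; by rewrite big_ord0 mulr0.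
have [a ha] := fchoice hv.
have ha' : forall i, v i = \sum_k a i k * w k by move=> i; case: (ha i).
have haR : forall i k, R (a i k) by move=> i; case: (ha i).
pose wn := fun k : 'I_n => w (widen_ord (leqnSn n) k).
case: (classic (exists p, a p ord_max != 0)) => [[p hp]|hno]; last first.
  apply: (IH m wn v (ltnW hnm)) => i.
  exists (fun k => a i (widen_ord (leqnSn n) k)); split => //.
  rewrite ha' big_ord_recr /=.
  have -> : a i ord_max = 0 by apply/eqP; apply: contraT => hne; case: hno; exists i.
  by rewrite mul0r addr0.
case: m v hnm hv a ha ha' haR p hp => [|m'] v hnm hv a ha ha' haR p hp; first by clear hp; case: p.
pose al := a p ord_max.
pose d := fun i => a i ord_max * al^-1.
have hdR : forall i, R (d i).
  move=> i; apply: (dsrM hR); first exact: haR. apply: (dsrV hR); [exact: haR | exact: hp].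
have alU : al \is a GRing.unit by apply: hD.
pose v' := fun j : 'I_m' => v (lift p j) - d (lift p j) * v p.
have hv' : forall j, lspan R wn (v' j).
  move=> j; exists (fun k => a (lift p j) (widen_ord (leqnSn n) k) - d (lift p j) * a p (widen_ord (leqnSn n) k)).
  split; first by move=> k; apply: dsrB => //; apply: dsrM.
  rewrite /v' !ha' mulr_sumr -sumrB big_ord_recr /=.
  have -> : a (lift p j) ord_max * w ord_max - d (lift p j) * (a p ord_max * w ord_max) = 0.
    by rewrite mulrA /d -(mulrA _ al^-1) mulVr // mulr1 subrr.
  by rewrite addr0; apply: eq_bigr => k _; rewrite mulrBl mulrA.
have [c' [hc'R [j0 hj0] hc'0]] := IH m' wn v' hnm hv'.
pose c := fun i => if unlift p i is Some j then c' j else - \sum_j c' j * d (lift p j).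
exists c; split.
- move=> i; rewrite /c; case: (unliftP p i) => [j _|_]; first exact: hc'R.
  apply: dsrN => //; apply: dsr_sum => // j; exact: dsrM.
- by exists (lift p j0); rewrite /c liftK.
- rewrite (bigD1_ord p) //= /c unlift_none.
  under eq_bigr => j _ do rewrite liftK.
  have E : \sum_j c' j * v' j = \sum_j c' j * v (lift p j) - (\sum_j c' j * d (lift p j)) * v p.
    by rewrite mulr_suml -sumrB; apply: eq_bigr => j _; rewrite /v' mulrBr mulrA.
  by rewrite mulNr addrC -E.
Qed.

End Steinitz.

Section Indep.
Variable D : unitRingType.
Hypothesis hD : is_division_ring D.

Lemma center_dsr : division_subring (@center D).
Proof.
split.
- by split=> // y _; rewrite mul1r mulr1.
- move=> x y [_ hx] [_ hy]; split=> // z _; by rewrite mulrBl mulrBr hx // hy.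
- move=> x y [_ hx] [_ hy]; split=> // z _; by rewrite -mulrA hy // mulrA hx // mulrA.
- move=> x [_ hx] x0; split=> // z _; have xU := hD x0.
  by apply: (mulrI xU); rewrite mulVKr // mulrA hx // mulrK.
Qed.

Lemma centerof_dsr (K : D -> Prop) : division_subring K -> division_subring (centerof K).
Proof.
move=> hK; split.
- by split; [exact: dsr1 | move=> y _; rewrite mul1r mulr1].
- move=> x y [kx hx] [ky hy]; split; first exact: dsrB.
  by move=> z hz; rewrite mulrBl mulrBr hx // hy.
- move=> x y [kx hx] [ky hy]; split; first exact: dsrM.
  by move=> z hz; rewrite -mulrA hy // mulrA hx // mulrA.
- move=> x [kx hx] x0; split; first exact: dsrV.
  move=> z hz; have xU := hD x0.
  by apply: (mulrI xU); rewrite mulVKr // mulrA hx // mulrK.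
Qed.

Lemma div_gen_dsr (A : D -> Prop) : division_subring (div_gen A).
Proof.
split.
- by move=> K hK _; exact: dsr1.
- by move=> x y hx hy K hK hA; apply: dsrB => //; [apply: hx | apply: hy].
- by move=> x y hx hy K hK hA; apply: dsrM => //; [apply: hx | apply: hy].
- by move=> x hx x0 K hK hA; apply: dsrV => //; apply: hx.
Qed.

Lemma div_gen_min (A K : D -> Prop) : division_subring K ->
  (forall a, A a -> K a) -> forall x, div_gen A x -> K x.
Proof. by move=> hK hA x hx; apply: hx. Qed.

Lemma div_gen_incl (A : D -> Prop) a : A a -> div_gen A a.
Proof. by move=> ha K _ hA; apply: hA. Qed.

Definition indep (R : D -> Prop) m (a : 'I_m -> D) :=
  forall c : 'I_m -> D, (forall i, R (c i)) -> \sum_i c i * a i = 0 -> forall i, c i = 0.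

Definition ext m (a : 'I_m -> D) (x : D) : 'I_m.+1 -> D :=
  fun i => if unlift ord_max i is Some j then a j else x.

Lemma sum_ext m (c : 'I_m.+1 -> D) a x :
  \sum_i c i * ext a x i = c ord_max * x + \sum_j c (lift ord_max j) * a j.
Proof.
rewrite (bigD1_ord ord_max) //= /ext unlift_none.
by under eq_bigr => j _ do rewrite liftK.
Qed.

Variable R : D -> Prop.
Hypothesis hR : division_subring R.

Lemma ext_dep m (a : 'I_m -> D) x : indep R a -> ~ indep R (ext a x) -> lspan R a x.
Proof.
move=> ha hn; apply: NNPP => hns; apply: hn => c hc hs.
have cm0 : c ord_max = 0.
  apply/eqP; apply: contraT => cm; case: hns.
  have cU := hD cm.
  exists (fun j => - (c ord_max)^-1 * c (lift ord_max j)); split.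
    move=> j; apply: (dsrM hR); last exact: hc. apply: (dsrN hR); exact: (dsrV hR (hc _) cm).
  rewrite sum_ext in hs.
  have hx : c ord_max * x = - \sum_j c (lift ord_max j) * a j by apply/eqP; rewrite -addr_eq0 hs.
  rewrite -[x](mulKr cU) hx mulrN -mulNr mulr_sumr.
  by apply: eq_bigr => j _; rewrite mulrA.
rewrite sum_ext cm0 mul0r add0r in hs.
have hl := ha _ (fun j => hc _) hs.
move=> i; case: (unliftP ord_max i) => [j ->|->] //.
Qed.

Lemma indep_lift m (a : 'I_m.+1 -> D) (p : 'I_m.+1) :
  indep R a -> indep R (fun j => a (lift p j)).
Proof.
move=> ha c hc hs.
pose c' := fun i => if unlift p i is Some j then c j else 0.
have := ha c'.
have h1 : forall i, R (c' i) by move=> i; rewrite /c'; case: (unlift p i) => [j|]; [exact: hc | exact: dsr0].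
move/(_ h1) => h2 j.
have : c' (lift p j) = 0.
  apply: h2; rewrite (bigD1_ord p) //= /c' unlift_none mul0r add0r.
  by under eq_bigr => k _ do rewrite liftK.
by rewrite /c' liftK.
Qed.

Lemma lspan_ext m (a : 'I_m -> D) x y : lspan R a y -> lspan R (ext a x) y.
Proof.
move=> [c [hc ->]].
exists (fun i => if unlift ord_max i is Some j then c j else 0); split.
  by move=> i; case: (unlift ord_max i) => [j|]; [exact: hc | exact: dsr0].
rewrite sum_ext unlift_none mul0r add0r.
by apply: eq_bigr => j _; rewrite liftK.
Qed.

Lemma extract m (f : 'I_m -> D) : exists r (g : 'I_r -> D),
  [/\ forall j, exists i, g j = f i, indep R g & forall i, lspan R g (f i)].
Proof.
elim: m f => [|m IH] f.
  exists 0%N, (fun _ => 0); split; [by case | by move=> c _ _; case | by case].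
have [r [g [hg1 hg2 hg3]]] := IH (fun i => f (lift ord_max i)).
case: (classic (indep R (ext g (f ord_max)))) => hi.
  exists r.+1, (ext g (f ord_max)); split => //.
  - move=> j; rewrite /ext; case: (unlift ord_max j) => [j'|]; last by exists ord_max.
    by have [i ->] := hg1 j'; exists (lift ord_max i).
  - move=> i; case: (unliftP ord_max i) => [j ->|->].
      exact: lspan_ext.
    have := lspan_gen hR (ext g (f ord_max)) ord_max.
    by rewrite /ext unlift_none.
exists r, g; split => //.
- by move=> j; have [i ->] := hg1 j; exists (lift ord_max i).
- move=> i; case: (unliftP ord_max i) => [j ->|->] //.
  exact: ext_dep.
Qed.

End Indep.

Section LemmaAB.
Variable D : unitRingType.
Hypothesis hD : is_division_ring D.
Variable K : D -> Prop.
Hypothesis hK : division_subring K.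

Lemma lemA r (g : 'I_r -> D) : (forall j, center (g j)) -> indep (centerof K) g ->
  forall k : 'I_r -> D, (forall j, K (k j)) -> \sum_j k j * g j = 0 -> forall j, k j = 0.
Proof.
elim: r g => [|r IH] g hgc hgi k hk hs; first by case.
have IH' := IH _ (fun j => hgc _) (@indep_lift _ _ (centerof_dsr hD hK) _ _ ord0 hgi).
have [k0|k0] := eqVneq (k ord0) 0.
  rewrite big_ord_recl k0 mul0r add0r in hs.
  have ht := IH' _ (fun j => hk _) hs.
  by move=> j; case: (unliftP ord0 j) => [j' ->|->].
exfalso.
have kU := hD k0.
pose k' := fun j => (k ord0)^-1 * k j.
have hk' : forall j, K (k' j) by move=> j; apply: dsrM => //; apply: dsrV.
have hs' : \sum_j k' j * g j = 0.
  by rewrite /k'; under eq_bigr => j _ do rewrite -mulrA; rewrite -mulr_sumr hs mulr0.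
have k'0 : k' ord0 = 1 by rewrite /k' mulVr.
have hc : forall j, centerof K (k' j).
  move=> j; split => // y hy.
  pose h := fun j => y * k' j - k' j * y.
  have hsh : \sum_j h j * g j = 0.
    rewrite /h.
    under eq_bigr => i _ do rewrite mulrBl -mulrA -(mulrA (k' i)) -(proj2 (hgc i) y I) mulrA.
    rewrite sumrB.
    have e1 : \sum_i y * k' i * g i = y * \sum_i k' i * g i by rewrite mulr_sumr; apply: eq_bigr => i _; rewrite mulrA.
    have e2 : \sum_i k' i * (g i * y) = (\sum_i k' i * g i) * y by rewrite mulr_suml; apply: eq_bigr => i _; rewrite mulrA.
    by rewrite e1 e2 hs' mulr0 mul0r subrr.
  rewrite big_ord_recl {1}/h k'0 mul1r mulr1 subrr mul0r add0r in hsh.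
  have hh := IH' (fun j => h (lift ord0 j)) _ hsh.
  have : h j = 0.
    case: (unliftP ord0 j) => [j' ->|->]; last by rewrite /h k'0 mul1r mulr1 subrr.
    apply: hh => i; rewrite /h; apply: dsrB => //; apply: dsrM => //.
  by move/eqP; rewrite /h subr_eq0 => /eqP.
have := hgi k' hc hs' ord0.
by rewrite k'0; apply/eqP; exact: oner_neq0.
Qed.

Lemma lemB m (a : 'I_m -> D) : (forall i, K (a i)) -> indep (centerof K) a ->
  indep (@center D) a.
Proof.
move=> haK hai f hf hs.
have hZ := centerof_dsr hD hK.
have [r [g [hg1 hg2 hg3]]] := extract hD hZ f.
have hgc : forall j, center (g j) by move=> j; have [i ->] := hg1 j.
have [z hz] := fchoice hg3.
have hzZ : forall i j, centerof K (z i j) by move=> i; case: (hz i).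
have hfz : forall i, f i = \sum_j z i j * g j by move=> i; case: (hz i).
have hs2 : \sum_j (\sum_i z i j * a i) * g j = 0.
  rewrite -[RHS]hs.
  under [RHS]eq_bigr => i _ do rewrite hfz mulr_suml.
  rewrite exchange_big /=; apply: eq_bigr => j _; rewrite mulr_suml; apply: eq_bigr => i _.
  by rewrite -!mulrA (proj2 (hgc j) (a i) I).
have h0 := lemA hgc hg2 (fun j => dsr_sum hK (fun i => dsrM hK (proj1 (hzZ i j)) (haK i))) hs2.
move=> i; rewrite hfz big1 // => j _.
by rewrite (hai (fun i => z i j) (fun i => hzZ i j) (h0 j)) mul0r.
Qed.

End LemmaAB.

Lemma nat_max (P : nat -> Prop) n : P 0%N -> (forall k, P k -> (k <= n)%N) ->
  exists k, P k /\ ~ P k.+1.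
Proof.
move=> h0 hb.
suff : forall d k, P k -> (n - k <= d)%N -> exists k, P k /\ ~ P k.+1.
  by move/(_ n 0%N h0); apply; lia.
elim=> [|d IH] k hk hd.
  exists k; split => // hk1; have := hb _ hk1; lia.
case: (classic (P k.+1)) => h1; last by exists k.
apply: (IH k.+1 h1); have := hb _ h1; lia.
Qed.

Section Forward.
Variable D : unitRingType.
Hypothesis hD : is_division_ring D.

Lemma lf_alg : locally_finite D -> algebraic_over_center D.
Proof.
move=> H x.
have [n [b [hb hsp]]] := H [:: x].
pose L := div_gen_over_center [:: x].
have hL : division_subring L := div_gen_dsr _.
have xL : L x by apply: div_gen_incl; right; rewrite mem_head.
have hv : forall i : 'I_n.+1, lspan (@center D) b (x ^+ i).
  by move=> i; exact: (hsp (x ^+ i) (dsrX i hL xL)).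
have [c [hcR [i0 hi0] hc0]] := steinitz hD (center_dsr hD) (ltnSn n) hv.
exists (\poly_(i < n.+1) c (inord i)); split.
- apply/eqP => /(congr1 (fun p : {poly D} => p`_i0)).
  by rewrite coef_poly ltn_ord inord_val coef0 => /eqP; apply/negP.
- move=> i; rewrite coef_poly; case: ifP => _; first exact: hcR.
  exact: (dsr0 (center_dsr hD)).
- rewrite (horner_coef_wide _ (size_poly _ _)) -[RHS]hc0.
  by apply: eq_bigr => i _; rewrite coef_poly ltn_ord inord_val.
Qed.

Lemma lf_wlf : locally_finite D -> weakly_locally_finite D.
Proof.
move=> H S /=.
pose K := div_gen (fun a => a \in S).
pose L := div_gen_over_center S.
have hK : division_subring K := div_gen_dsr _.
have hL : division_subring L := div_gen_dsr _.
have KL : forall x, K x -> L x.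
  by apply: div_gen_min => // a ha; apply: div_gen_incl; right.
have hZ := centerof_dsr hD hK.
have [n [b [hb hsp]]] := H S.
have hbound : forall m (a : 'I_m -> D), (forall i, K (a i)) ->
    indep (centerof K) a -> (m <= n)%N.
  move=> m a haK hai; rewrite leqNgt; apply/negP => hnm.
  have hv : forall i, lspan (@center D) b (a i) by move=> i; apply: hsp; apply: KL.
  have [c [hcR [i0 hi0] hc0]] := steinitz hD (center_dsr hD) hnm hv.
  by have := lemB hD hK haK hai hcR hc0 i0; apply/eqP.
pose P := fun k => exists a : 'I_k -> D, (forall i, K (a i)) /\ indep (centerof K) a.
have P0 : P 0%N by exists (fun _ => 0); split; [case | move=> c _ _; case].
have hPb : forall k, P k -> (k <= n)%N by move=> k [a0 [h1 h2]]; exact: hbound h1 h2.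
have [m [[a [haK hai]] hnP]] := nat_max P0 hPb.
exists m, a; split => // x hx.
apply: (ext_dep hD hZ hai) => hi; apply: hnP.
exists (ext a x); split => // i; rewrite /ext; case: (unlift ord_max i) => [j|] //.
Qed.

End Forward.

Section Backward1.
Variable D : unitRingType.
Hypothesis hD : is_division_ring D.
Hypothesis Halg : algebraic_over_center D.
Local Notation F := (@center D).
Let hF := center_dsr hD.

Lemma lspan_prod (I J : finType) (v : I -> D) (w : J -> D) x y :
  lspan F v x -> lspan F w y -> lspan F (fun q : I * J => v q.1 * w q.2) (x * y).
Proof.
move=> [c [hc ->]] [d [hd ->]].
exists (fun q => c q.1 * d q.2); split; first by move=> q; apply: dsrM.
rewrite mulr_suml; under eq_bigr => i _ do rewrite mulr_sumr.
rewrite pair_bigA; apply: eq_bigr => [[i j]] _ /=.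
by rewrite -!mulrA (mulrA (v i)) -(proj2 (hd j) (v i) Logic.I) !mulrA.
Qed.

Lemma lspan_mulcl (I : finType) (w : I -> D) :
  (forall i j, lspan F w (w i * w j)) ->
  forall x y, lspan F w x -> lspan F w y -> lspan F w (x * y).
Proof.
move=> hw x y [c [hc ->]] [d [hd ->]].
rewrite mulr_suml; apply: lspan_sum => // i; rewrite mulr_sumr; apply: lspan_sum => // j.
rewrite -mulrA (mulrA (w i)) -(proj2 (hd j) (w i) Logic.I) !mulrA -mulrA.
by apply: lspan_scale => //; apply: dsrM.
Qed.

Lemma powers_in (P : D -> Prop) x : P 1 -> (forall a b, P a -> P b -> P (a * b)) ->
  P x -> forall k, P (x ^+ k).
Proof. by move=> h1 hm hx; elim=> [|k IH]; [rewrite expr0 | rewrite exprS; apply: hm]. Qed.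

Lemma adjoin (I : finType) (u : I -> D) t :
  lspan F u 1 -> (forall x y, lspan F u x -> lspan F u y -> lspan F u (x * y)) ->
  (forall i, t * u i = u i * t) ->
  exists (J : finType) (u' : J -> D),
  [/\ lspan F u' 1, lspan F u' t, forall x, lspan F u x -> lspan F u' x,
      forall x y, lspan F u' x -> lspan F u' y -> lspan F u' (x * y) &
      forall q, exists e i, u' q = t ^+ e * u i].
Proof.
move=> hu1 hum htu.
have [p [pn0 pc pt]] := Halg t.
pose d := (size p).-1.
have sp : size p = d.+1 by rewrite /d prednK // size_poly_gt0.
have pdn0 : p`_d != 0.
  by have := pn0; rewrite -lead_coef_eq0 /lead_coef sp.
have d0 : (0 < d)%N.
  rewrite lt0n; apply/negP => /eqP d0.
  move: pt pdn0; rewrite horner_coef sp d0 big_ord1 expr0 mulr1 => ->.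
  by rewrite eqxx.
pose T := lspan F (fun e : 'I_d => t ^+ e).
have pdU := hD pdn0.
have Td : T (t ^+ d).
  move: pt; rewrite horner_coef sp big_ord_recr /= => /eqP; rewrite addrC addr_eq0 => /eqP hpt.
  rewrite -[t ^+ d](mulKr pdU) hpt mulrN -mulNr mulr_sumr.
  apply: lspan_sum => // i; rewrite mulrA; apply: lspan_scale => //.
    apply: (dsrM hF); last exact: pc. apply: (dsrN hF); exact: (dsrV hF (pc _) pdn0).
  exact: (lspan_gen hF (fun e : 'I_d => t ^+ e) i).
have Tt : forall y, T y -> T (t * y).
  move=> y [c [hc ->]]; rewrite mulr_sumr; apply: lspan_sum => // e.
  rewrite mulrA -(proj2 (hc e) t Logic.I) -mulrA; apply: lspan_scale => //.
  rewrite -exprS; have [lt|] := ltnP e.+1 d.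
    exact: (lspan_gen hF (fun e : 'I_d => t ^+ e) (Ordinal lt)).
  by move=> hge; have -> : e.+1 = d by have := ltn_ord e; lia.
have Tk : forall k, T (t ^+ k).
  elim=> [|k IH]; last by rewrite exprS; apply: Tt.
  exact: (lspan_gen hF (fun e : 'I_d => t ^+ e) (Ordinal d0)).
pose u' := fun q : 'I_d * I => t ^+ q.1 * u q.2.
have hprod : forall x y, T x -> lspan F u y -> lspan F u' (x * y).
  by move=> x y hx hy; exact: (lspan_prod hx hy).
exists ('I_d * I)%type, u'; split.
- by rewrite -(mulr1 1); apply: hprod => //; rewrite -(expr0 t).
- by rewrite -[t]mulr1; apply: hprod => //; rewrite -[t]expr1.
- by move=> x hx; rewrite -[x]mul1r; apply: hprod => //; rewrite -(expr0 t).
- apply: lspan_mulcl => [[e i]] [e' j] /=; rewrite /u' /=.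
  have ct : forall k, u i * t ^+ k = t ^+ k * u i.
    by move=> k; have := commrX k (esym (htu i)).
  rewrite -mulrA (mulrA (u i)) ct -mulrA mulrA -exprD.
  apply: hprod => //; apply: hum; exact: (lspan_gen hF u _).
- by move=> [e i]; exists (nat_of_ord e), i.
Qed.

Lemma finalg (ts : seq D) :
  (forall t t', t \in ts -> t' \in ts -> t * t' = t' * t) ->
  exists (I : finType) (u : I -> D),
  [/\ lspan F u 1, forall t, t \in ts -> lspan F u t,
      forall x y, lspan F u x -> lspan F u y -> lspan F u (x * y) &
      forall Q : D -> Prop, Q 1 -> (forall x y, Q x -> Q y -> Q (x * y)) ->
        (forall t, t \in ts -> Q t) -> forall i, Q (u i)].
Proof.
elim: ts => [|t ts IH] hc.
  exists unit, (fun _ => 1); split => //.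
  - exact: (lspan_gen hF (fun _ : unit => (1 : D)) tt).
  - apply: lspan_mulcl => _ _; rewrite mulr1; exact: (lspan_gen hF (fun _ : unit => (1 : D)) tt).
have [I [u [hu1 hut hum huQ]]] : exists (I : finType) (u : I -> D),
  [/\ lspan F u 1, forall t, t \in ts -> lspan F u t,
      forall x y, lspan F u x -> lspan F u y -> lspan F u (x * y) &
      forall Q : D -> Prop, Q 1 -> (forall x y, Q x -> Q y -> Q (x * y)) ->
        (forall t, t \in ts -> Q t) -> forall i, Q (u i)].
  by apply: IH => a b ha hb; apply: hc; rewrite inE ?ha ?hb orbT.
have htu : forall i, t * u i = u i * t.
  apply: (huQ (fun y => t * y = y * t)).
  - by rewrite mul1r mulr1.
  - by move=> x y hx hy; rewrite mulrA hx -mulrA hy mulrA.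
  - by move=> t' ht'; apply: hc; rewrite inE ?ht' ?eqxx ?orbT.
have [J [u' [h1 h2 h3 h4 h5]]] := adjoin hu1 hum htu.
exists J, u'; split => //.
- move=> t'; rewrite inE => /orP [/eqP ->|ht'] //; exact: h3 (hut _ ht').
- move=> Q q1 qm qt q; have [e [i ->]] := h5 q.
  apply: (qm); first exact: (powers_in q1 qm (qt t (mem_head t ts))).
  by apply: huQ => // t' ht'; apply: qt; rewrite inE ht' orbT.
Qed.

End Backward1.

Section Backward2.
Variable D : unitRingType.
Hypothesis hD : is_division_ring D.
Hypothesis Halg : algebraic_over_center D.
Local Notation F := (@center D).
Let hF := center_dsr hD.

Variable I : finType.
Variable w : I -> D.
Hypothesis hw1 : lspan F w 1.
Hypothesis hwm : forall x y, lspan F w x -> lspan F w y -> lspan F w (x * y).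

Lemma horner_in (p : {poly D}) x : (forall i, F p`_i) -> lspan F w x -> lspan F w p.[x].
Proof.
move=> hp hx; rewrite horner_coef; apply: lspan_sum => // i.
apply: lspan_scale => //; exact: powers_in.
Qed.

Lemma hornerXn (r : {poly D}) x k : (r * 'X^k).[x] = r.[x] * x ^+ k.
Proof.
elim: k => [|k IH]; first by rewrite !expr0 !mulr1.
by rewrite exprSr mulrA hornerMX IH exprSr mulrA.
Qed.

Lemma inv_in v : lspan F w v -> v != 0 -> lspan F w v^-1.
Proof.
move=> hv v0; have vU := hD v0.
have [p [pn0 pc pv]] := Halg v.
have ex : exists i, p`_i != 0.
  by exists (size p).-1; have := pn0; rewrite -lead_coef_eq0.
case: (ex_minnP ex) => j hj hmin.
pose q := drop_poly j p.
have tk : take_poly j p = 0.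
  apply/polyP => i; rewrite coef_take_poly coef0; case: ifP => // hij.
  apply/eqP; apply: contraT => hne; have := hmin i hne; lia.
have hp : p = q * 'X^j by rewrite -{1}(poly_take_drop j p) tk add0r.
have qv : q.[v] = 0.
  apply: (mulIr (unitrX j vU)); by rewrite mul0r -hornerXn -hp.
have q0 : q`_0 = p`_j by rewrite coef_drop_poly add0n.
have tq : take_poly 1 q = (q`_0)%:P.
  by apply/polyP => i; rewrite coef_take_poly coefC; case: i.
have hq := poly_take_drop 1 q.
pose r := drop_poly 1 q.
have e : q.[v] = q`_0 + r.[v] * v by rewrite -{1}hq hornerD tq hornerC hornerXn expr1.
have hr : r.[v] * v = - q`_0 by apply/eqP; rewrite -addr_eq0 addrC -e qv.
have q0U : q`_0 \is a GRing.unit by apply: hD; rewrite q0.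
have h1 : (- (q`_0)^-1 * r.[v]) * v = 1 by rewrite -mulrA hr mulrN mulNr opprK mulVr.
have -> : v^-1 = - (q`_0)^-1 * r.[v] by rewrite -[LHS]mul1r -h1 mulrK.
apply: lspan_scale => //; first by apply: (dsrN hF); apply: (dsrV hF); rewrite q0 //; exact: pc.
apply: horner_in => // i; rewrite /r /q !coef_drop_poly; exact: pc.
Qed.


End Backward2.

Lemma lspan_ord (D : unitRingType) (R : D -> Prop) (T : finType) (w : T -> D) x :
  lspan R w x -> lspan R (fun i : 'I_#|T| => w (enum_val i)) x.
Proof.
move=> [c [hc ->]]; exists (fun i => c (enum_val i)); split => //.
by rewrite (reindex (@enum_val T _) (onW_bij _ (@enum_val_bij T))).
Qed.

Section Backward3.
Variable D : unitRingType.
Hypothesis hD : is_division_ring D.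
Hypothesis Halg : algebraic_over_center D.
Local Notation F := (@center D).
Let hF := center_dsr hD.

Lemma lf_back : weakly_locally_finite D -> locally_finite D.
Proof.
move=> Hw S.
pose K := div_gen (fun a => a \in S).
pose L := div_gen_over_center S.
have hK : division_subring K := div_gen_dsr _.
have hL : division_subring L := div_gen_dsr _.
have KL : forall x, K x -> L x.
  by apply: div_gen_min => // a ha; apply: div_gen_incl; right.
have FL : forall x, F x -> L x by move=> x hx; apply: div_gen_incl; left.
have hZ := centerof_dsr hD hK.
have [m [b [hb hspK]]] := Hw S.
have [crd hcrd] : exists crd : D -> 'I_m -> D, forall y, K y ->
    (forall i, centerof K (crd y i)) /\ y = \sum_i crd y i * b i.
  apply: (fchoice (P := fun y c => K y -> (forall i, centerof K (c i)) /\ y = \sum_i c i * b i)).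
  move=> y; case: (classic (K y)) => hy.
    by have [c hc] := hspK y hy; exists c.
  by exists (fun _ => 0).
pose E := 1 :: S ++ [seq b i * b j | i <- enum 'I_m, j <- enum 'I_m].
have hE : forall y, y \in E -> K y.
  move=> y; rewrite inE mem_cat => /orP [/eqP ->|/orP [hy|/allpairsP [[i j] [_ _ ->]]]].
  - exact: (dsr1 hK).
  - exact: div_gen_incl.
  - exact: (dsrM hK (hb i) (hb j)).
pose ts := [seq crd y i | y <- E, i <- enum 'I_m].
have hts : forall t, t \in ts -> centerof K t.
  by move=> t /allpairsP [[y i] [hy _ ->]]; apply: (proj1 (hcrd y (hE y hy))).
have [I [u [hu1 hut hum huQ]]] := finalg hD Halg (ts := ts)
  (fun t t' ht ht' => proj2 (hts t ht) t' (proj1 (hts t' ht'))).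
have uZ : forall a, centerof K (u a).
  apply: huQ => //; [exact: (dsr1 hZ) | by move=> x y; apply: (dsrM hZ)].
have uL : forall a, L (u a).
  apply: huQ => //; [exact: (dsr1 hL) | by move=> x y; apply: (dsrM hL) | by move=> t ht; apply: KL; exact: (proj1 (hts t ht))].
pose U := lspan F u.
pose W := fun y => exists c : 'I_m -> D, (forall k, U (c k)) /\ y = \sum_k c k * b k.
pose V := lspan F (fun q : I * 'I_m => u q.1 * b q.2).
have WV : forall y, W y -> V y.
  move=> y [c [hc ->]]; apply: lspan_sum => // k.
  exact: (lspan_prod hD (hc k) (lspan_gen hF b k)).
have UW : forall x y, U x -> W y -> W (x * y).
  move=> x y hx [c [hc ->]]; exists (fun k => x * c k); split; first by move=> k; exact: (hum _ _ hx (hc k)).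
  by rewrite mulr_sumr; apply: eq_bigr => k _; rewrite mulrA.
have EW : forall y, y \in E -> W y.
  move=> y hy; exists (crd y); split; last exact: (proj2 (hcrd y (hE y hy))).
  by move=> k; apply: hut; apply/allpairsP; exists (y, k); rewrite mem_enum.
have V1 : V 1 by apply: WV; apply: EW; exact: mem_head.
have Vm : forall x y, V x -> V y -> V (x * y).
  apply: (lspan_mulcl hD) => [[a i]] [a' j] /=.
  rewrite -mulrA (mulrA (b i)) -(proj2 (uZ a') (b i) (hb i)) -!mulrA mulrA.
  apply: WV; apply: UW.
    by apply: hum; exact: (lspan_gen hF u _).
  apply: EW; rewrite inE mem_cat; apply/orP; right; apply/orP; right.
  by apply/allpairsP; exists (i, j); rewrite !mem_enum.
have hV : division_subring V.
  split => //.
  - by move=> x y; apply: lspanB.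
  - by move=> x hx x0; apply: (inv_in hD Halg V1 Vm).
have LV : forall x, L x -> V x.
  apply: div_gen_min => // a [ha|ha].
    by rewrite -[a]mulr1; exact: (lspan_scale hF ha V1).
  by apply: WV; apply: EW; rewrite inE mem_cat ha orbT.
have VL : forall x, V x -> L x.
  move=> x [c [hc ->]]; apply: (dsr_sum hL) => q; apply: (dsrM hL); first exact: FL.
  by apply: (dsrM hL); [exact: uL | exact: (KL _ (hb _))].
have H1 := fun x hx => lspan_ord (LV x hx).
eexists _, _; split; last exact: H1.
by move=> i; apply: (dsrM hL); [exact: uL | exact: (KL _ (hb _))].
Qed.
End Backward3.

Theorem theorem5p2 (D : unitRingType) (hD : is_division_ring D) :
  locally_finite D <-> weakly_locally_finite D /\ algebraic_over_center D.
Proof.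
split.
- by move=> H; split; [exact: lf_wlf | exact: lf_alg].
- by move=> [Hw Ha]; exact: (lf_back hD Ha Hw).
Qed.
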